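(* Let $\Delta_3=x_1x_2x_1\in\mathcal{B}_3$. For every integer $k\ge0$, $$V_3(\Delta_3^{2k})=2s^{12k}+s^{6k+2}+s^{6k-2},\qquad V_3(\Delta_3^{2k+1})=-s^{6k+5}-s^{6k+1}.$$
   Context: $\mathcal{B}_3$ is the braid group on three strands with standard Artin generators $x_1,x_2$; $V_3(\beta)$ is the Jones polynomial of the closure $\widehat\beta$, normalized by $V(\text{unknot})=1$ and $q^{-1}V_{L_+}-qV_{L_-}=(q^{1/2}-q^{-1/2})V_{L_0}$, written in the variable $s=q^{-1/2}$. Conventions: closures of $\alpha x_i^{e+2}\gamma$, $\alpha x_i^{e+1}\gamma$, $\alpha x_i^{e}\gamma$ play the roles of $L_-,L_0,L_+$ (e.g. the closure of $x_1^2\in\mathcal B_2$ has Jones polynomial $-s-s^5$). *)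

(* Defs.v *)
From HB Require Import structures.
From mathcomp Require Import all_boot all_order all_algebra.
Set Implicit Arguments. Unset Strict Implicit. Unset Printing Implicit Defensive.
Import Order.TTheory GRing.Theory Num.Theory.
Local Open Scope ring_scope.

(* A braid word on n strands: a list of letters (i, b); (i, true) stands for
   the Artin generator x_(i+1) and (i, false) for its inverse x_(i+1)^-1
   (0 <= i, i + 2 <= n).  Following the paper's conventions (closures of
   alpha x_i^(e+2) gamma, alpha x_i^(e+1) gamma, alpha x_i^e gamma play the
   roles of L_-, L_0, L_+), a letter x_i is a NEGATIVE crossing. *)
Definition braid_word := seq (nat * bool).

Definition valid_word (n : nat) (w : braid_word) : bool :=
  all (fun l => (l.1.+2 <= n)%N) w.

(* Vertices of the closed-braid state graph: strand p at level j
   (levels taken mod m = size w, which realizes the closure). *)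
Definition vid (n m j p : nat) : nat :=
  if m is 0 then p else ((j %% m) * n + p)%N.

(* Edges contributed by letter number j = (i, _) when smoothed:
   h = false : "vertical" (oriented) smoothing,
   h = true  : "horizontal" smoothing (cap + cup). *)
Definition letter_edges (n m j : nat) (l : nat * bool) (h : bool)
  : seq (nat * nat) :=
  let i := l.1 in
  [seq (vid n m j p, vid n m j.+1 p)
     | p <- iota 0 n & ~~ (h && ((p == i) || (p == i.+1)))]
  ++ (if h then [:: (vid n m j i, vid n m j i.+1);
                    (vid n m j.+1 i, vid n m j.+1 i.+1)] else [::]).

Definition state_edges (n : nat) (w : braid_word) (st : seq bool)
  : seq (nat * nat) :=
  flatten [seq letter_edges n (size w) j (nth (0%N, true) w j) (nth false st j)
          | j <- iota 0 (size w)].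

Definition merge (lab : nat -> nat) (e : nat * nat) : nat -> nat :=
  let lu := lab e.1 in let lv := lab e.2 in
  fun x => if lab x == lv then lu else lab x.

Definition nloops (n : nat) (w : braid_word) (st : seq bool) : nat :=
  let N := if size w is 0 then n else (size w * n)%N in
  let lab := foldl merge id (state_edges n w st) in
  size (undup [seq lab x | x <- iota 0 N]).

(* Exponent of A contributed by a state: for a letter x_i (negative
   crossing) the horizontal smoothing is the A-smoothing, for x_i^-1 the
   vertical one is. *)
Definition state_Aexp (w : braid_word) (st : seq bool) : int :=
  \sum_(j < size w)
     (if (nth false st j) == (nth (0%N, true) w j).2 then 1 else -1).

Definition writhe (w : braid_word) : int :=
  \sum_(l <- w) (if l.2 then -1 else 1).

(* Normalized Kauffman bracket (unknot = 1), evaluated at A = a. *)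
Definition kbracket (R : fieldType) (n : nat) (w : braid_word) (a : R) : R :=
  \sum_(st : (size w).-tuple bool)
     a ^ state_Aexp w st * (- a ^+ 2 - a ^- 2) ^+ (nloops n w st).-1.

(* Jones polynomial of the closure of the braid word w on n strands,
   V = (-A^3)^(-writhe) <D>, evaluated at A = a, where A = t^(-1/4)
   i.e. s = q^(-1/2) = A^2. *)
Definition jones (R : fieldType) (n : nat) (w : braid_word) (a : R) : R :=
  (- a ^+ 3) ^ (- writhe w) * kbracket n w a.

Definition Delta3 : braid_word := [:: (0%N, true); (1%N, true); (0%N, true)].
Definition Delta3_pow (m : nat) : braid_word := flatten (nseq m Delta3).

(* Main.v *)
Require Import Defs.
From mathcomp Require Import all_boot all_order all_algebra.
From mathcomp Require Import zify.
Set Implicit Arguments. Unset Strict Implicit. Unset Printing Implicit Defensive.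
Import GRing.Theory.

Lemma merge_ker (f : nat -> nat) (e : nat * nat) x y :
  (Defs.merge f e x == Defs.merge f e y) =
  (f x == f y) || ((f x == f e.1) || (f x == f e.2)) && ((f y == f e.1) || (f y == f e.2)).
Proof.
rewrite /Defs.merge /=.
move: (f x) (f y) (f e.1) (f e.2) => A B U V.
case: (A =P V) => [->|hA]; case: (B =P V) => [->|hB]; rewrite ?eqxx ?orbT ?andbT ?orbF //=.
- by rewrite (eq_sym V) (negbTE (introN eqP hB)) eq_sym.
- by rewrite (negbTE (introN eqP hA)).
- by case: (A =P U) => [->|] /=; [rewrite eq_sym orbb | rewrite orbF].
Qed.

Definition mfold (f : nat -> nat) (E : seq (nat * nat)) := foldl Defs.merge f E.
Definition emap (phi : nat -> nat) (E : seq (nat * nat)) := [seq (phi e.1, phi e.2) | e <- E].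

Lemma fold_ren (phi : nat -> nat) (D : pred nat) E f g :
  all (fun e => D e.1 && D e.2) E ->
  {in D &, forall x y, (g x == g y) = (f (phi x) == f (phi y))} ->
  {in D &, forall x y, (mfold g E x == mfold g E y) =
                       (mfold f (emap phi E) (phi x) == mfold f (emap phi E) (phi y))}.
Proof.
elim: E f g => [|e E IH] f g //= /andP[/andP[D1 D2] HE] H.
apply: IH => // x y Dx Dy.
by rewrite !merge_ker /= !H.
Qed.

Lemma fold_fresh x E f :
  all (fun e => (e.1 != x) && (e.2 != x)) E ->
  (forall y, (f x == f y) = (x == y)) ->
  forall y, (mfold f E x == mfold f E y) = (x == y).
Proof.
elim: E f => [|e E IH] f //= /andP[/andP[D1 D2] HE] H.
apply: IH => // y.
rewrite merge_ker H (H e.1) (H e.2) (eq_sym x e.1) (eq_sym x e.2) (negbTE D1) (negbTE D2).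
by rewrite /= ?andbF ?orbF.
Qed.

Definition cnt (f : nat -> nat) (s : seq nat) := size (undup (map f s)).

Lemma undup_eq_size (s t : seq nat) : s =i t -> size (undup s) = size (undup t).
Proof.
move=> H; apply: perm_size; apply: uniq_perm; rewrite ?undup_uniq // => z.
by rewrite !mem_undup H.
Qed.

Lemma mem_map_has (f : nat -> nat) x s : (f x \in map f s) = has (fun y => f x == f y) s.
Proof. by elim: s => //= y s IH; rewrite in_cons IH. Qed.

Lemma cnt_ker (f g : nat -> nat) (s : seq nat) : {in s &, forall x y, (f x == f y) = (g x == g y)} -> cnt f s = cnt g s.
Proof.
elim: s => //= x s IH H; rewrite /cnt /= !mem_map_has.
have -> : has (fun y => f x == f y) s = has (fun y => g x == g y) s.
  apply: eq_in_has => y ys; apply: H; by rewrite in_cons ?eqxx ?ys ?orbT.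
have E := IH (fun a b ha hb => H a b (mem_behead (s:=x::s) ha) (mem_behead (s:=x::s) hb)).
case: has; first exact: E.
by rewrite /=; congr S; exact: E.
Qed.

Lemma cnt_map f phi s : cnt f (map phi s) = cnt (f \o phi) s.
Proof. by rewrite /cnt -map_comp. Qed.

Lemma size_undup_cat_disj (s t : seq nat) : ~~ has (mem t) s ->
  size (undup (s ++ t)) = size (undup s) + size (undup t).
Proof.
move=> H; rewrite undup_cat size_cat; congr (_ + _).
rewrite (eq_in_filter (a2 := predT)) ?filter_predT // => z; rewrite mem_undup => zs /=.
apply/negP => zt; move/hasP: H; apply; by exists z.
Qed.

Lemma cnt_split F (W L : seq nat) : {subset W <= L} ->
  cnt F L = cnt F W + cnt F [seq x <- L | F x \notin map F W].
Proof.
move=> sub; rewrite /cnt -size_undup_cat_disj.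
  apply: undup_eq_size => z; rewrite mem_cat; apply/mapP/orP.
  - case=> x xL ->; case: (boolP (F x \in map F W)) => h; [by left|right].
    by apply/mapP; exists x => //; rewrite mem_filter h.
  - case=> [/mapP [x xW ->]|/mapP [x]]; first by exists x => //; apply: sub.
    by rewrite mem_filter => /andP[_ xL] ->; exists x.
apply/hasP => [[z /mapP [x xW ->]]] /=.
move=> /mapP [y]; rewrite mem_filter => /andP [h _] Exy.
by move: h; rewrite -Exy map_f.
Qed.

Lemma cnt_split_merge F e (W L : seq nat) : {subset W <= L} -> e.1 \in W -> e.2 \in W ->
  cnt (Defs.merge F e) L + cnt F W = cnt F L + cnt (Defs.merge F e) W.
Proof.
move=> sub h1 h2; rewrite (cnt_split (Defs.merge F e) sub) (cnt_split F sub).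
have Hf : forall x, (Defs.merge F e x \in map (Defs.merge F e) W) = (F x \in map F W).
  move=> x; rewrite !mem_map_has; apply/hasP/hasP => [[w wW]|[w wW Hw]].
    rewrite merge_ker => /orP [Hw|/andP [/orP [H|H] _]]; first by exists w.
      by exists e.1.
    by exists e.2.
  by exists w => //; rewrite merge_ker Hw.
rewrite (eq_filter (a2 := fun x => F x \notin map F W)); last by move=> x; rewrite Hf.
have -> : cnt (Defs.merge F e) [seq x <- L | F x \notin map F W] =
          cnt F [seq x <- L | F x \notin map F W].
  rewrite /cnt; congr (size (undup _)); apply/eq_in_map => x.
  rewrite mem_filter => /andP [H _]; rewrite /Defs.merge.
  case: eqP => // E; move: H; by rewrite E map_f.
lia.
Qed.

Lemma cnt_split_fold F E (W L : seq nat) : {subset W <= L} ->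
  all (fun e => (e.1 \in W) && (e.2 \in W)) E ->
  cnt (mfold F E) L + cnt F W = cnt F L + cnt (mfold F E) W.
Proof.
move=> sub; elim: E F => [|e E IH] F //=.
move=> /andP [/andP [h1 h2] HE].
have := IH (Defs.merge F e) HE; have := @cnt_split_merge F e W L sub h1 h2.
rewrite /mfold /=. lia.
Qed.

Definition sedges (lo hi i : nat) (h : bool) : seq (nat * nat) :=
  [seq (lo + p, hi + p) | p <- iota 0 3 & ~~ (h && ((p == i) || (p == i.+1)))]
  ++ (if h then [:: (lo + i, lo + i.+1); (hi + i, hi + i.+1)] else [::]).

Lemma vid_add M j p : vid 3 M.+1 j p = vid 3 M.+1 j 0 + p.
Proof. by rewrite /vid addn0. Qed.

Lemma letter_edgesE M j l h :
  letter_edges 3 M.+1 j l h = sedges (vid 3 M.+1 j 0) (vid 3 M.+1 j.+1 0) l.1 h.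
Proof.
rewrite /letter_edges /sedges; congr (_ ++ _).
  by apply: eq_map => p; rewrite (vid_add M j p) (vid_add M j.+1 p).
by case: h; rewrite // (vid_add M j l.1) (vid_add M j.+1 l.1)
  (vid_add M j l.1.+1) (vid_add M j.+1 l.1.+1).
Qed.

Lemma emap_sedges phi lo hi lo' hi' i h : i < 2 ->
  (forall p, p < 3 -> phi (lo + p) = lo' + p) ->
  (forall p, p < 3 -> phi (hi + p) = hi' + p) ->
  emap phi (sedges lo hi i h) = sedges lo' hi' i h.
Proof.
move=> hi2 H1 H2; rewrite /emap /sedges map_cat -map_comp; congr (_ ++ _).
  apply/eq_in_map => p; rewrite mem_filter mem_iota => /andP [_ hp] /=.
  by rewrite H1 ?H2.
have h0 : i < 3 by lia.
have h1 : i.+1 < 3 by lia.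
by case: h => //=; rewrite (H1 _ h0) (H1 _ h1) (H2 _ h0) (H2 _ h1).
Qed.

Definition inD (D : seq nat) (E : seq (nat * nat)) := all (fun e => (e.1 \in D) && (e.2 \in D)) E.

Lemma sedges_in9 i h : i < 2 -> inD (iota 0 9) (sedges 3 6 i h).
Proof. by case: i => [|[|]] //; case: h. Qed.

Lemma sedges_in6 i h : i < 2 -> inD (iota 0 6) (sedges 3 0 i h).
Proof. by case: i => [|[|]] //; case: h. Qed.

Lemma all_emap phi D E : inD D E -> inD (map phi D) (emap phi E).
Proof.
elim: E => //= e E IH /andP [/andP [h1 h2] HE].
by rewrite !map_f // IH.
Qed.

Lemma emap_id E : emap id E = E.
Proof. by elim: E => //= [[x y] E] ->. Qed.

Definition ext (g : nat -> nat) : nat -> nat :=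
  fun x => if x < 6 then (g x).*2 else (x.*2).+1.
Definition stepg (g : nat -> nat) i b : nat -> nat :=
  fun x => mfold (ext g) (sedges 3 6 i b) (if x < 3 then x else x + 3).
Definition stepc (g : nat -> nat) i b : nat :=
  cnt (mfold (ext g) (sedges 3 6 i b)) (iota 0 9)
  - cnt (mfold (ext g) (sedges 3 6 i b)) [:: 0; 1; 2; 6; 7; 8].
Definition finc (g : nat -> nat) i b : nat := cnt (mfold g (sedges 3 0 i b)) (iota 0 6).

Fixpoint mrun (g : nat -> nat) (ls : seq nat) (bs : seq bool) : nat :=
  match ls with
  | [::] => 0
  | i :: ls' =>
    match bs with
    | [::] => 0
    | b :: bs' => if ls' is [::] then finc g i b
                  else stepc g i b + mrun (stepg g i b) ls' bs'
    end
  end.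

Lemma mrun_cons g i ls b bs : ls != [::] ->
  mrun g (i :: ls) (b :: bs) = stepc g i b + mrun (stepg g i b) ls bs.
Proof. by case: ls. Qed.

Lemma cnt_sub f (W L : seq nat) : {subset W <= L} -> cnt f W <= cnt f L.
Proof. by move=> H; rewrite (cnt_split f H) leq_addr. Qed.

Lemma odd_neq a b : (a.*2 == b.*2.+1) = false.
Proof. by apply/eqP => /(congr1 odd); rewrite /= !odd_double. Qed.

Lemma eqn_double a b : (a.*2 == b.*2) = (a == b).
Proof. exact: (inj_eq (can_inj doubleK)). Qed.

Lemma allin2 (P : nat -> nat -> bool) s :
  all (fun x => all (P x) s) s -> {in s &, forall x y, P x y}.
Proof. by move=> /allP H x y xs ys; move: (H x xs) => /allP; apply. Qed.

Lemma allin2eq (P Q : nat -> nat -> bool) s :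
  all (fun x => all (fun y => P x y == Q x y) s) s -> {in s &, forall x y, P x y = Q x y}.
Proof. by move=> /allP H x y xs ys; move: (H x xs) => /allP /(_ y ys) /eqP. Qed.

Section Corr.
Variables (w : braid_word) (st : seq bool).
Hypothesis hw : all (fun l => l.1 < 2) w.
Hypothesis hst : size st = size w.

Definition BE j := letter_edges 3 (size w) j (nth (0%N, true) w j) (nth false st j).
Definition FF t := mfold id (flatten [seq BE j | j <- iota 0 t]).

Lemma FF_S t : FF t.+1 = mfold (FF t) (BE t).
Proof. by rewrite /FF -addn1 iotaD map_cat flatten_cat /mfold foldl_cat /= cats0. Qed.

Definition phi t x := if x < 3 then x else 3 * t + (x - 3).
Definition phi' t x := if x < 6 then phi t x else 3 * t + 3 + (x - 6).

Ltac solve_phi := rewrite ?/phi' ?/phi /=; repeat (case: ifP => ?); lia.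

Definition Inv t (g : nat -> nat) c :=
  [/\ {in iota 0 6 &, forall x y, (g x == g y) = (FF t (phi t x) == FF t (phi t y))},
      cnt (FF t) (iota 0 (3 * t + 3)) = c + cnt g (iota 0 6) &
      forall x, 3 * t + 3 <= x -> forall y, (FF t x == FF t y) = (x == y)].

Lemma letter_lt t : t < size w -> (nth (0%N, true) w t).1 < 2.
Proof. by move=> ht; exact: (allP hw) _ (mem_nth _ ht). Qed.

Lemma cnt_ext g : cnt (ext g) (iota 0 9) = cnt g (iota 0 6) + 3.
Proof.
rewrite /cnt (_ : iota 0 9 = iota 0 6 ++ [:: 6; 7; 8]) // map_cat size_undup_cat_disj.
  congr (_ + _); rewrite -/(cnt _ _) -/(cnt _ _); apply: cnt_ker => x y.
  rewrite !mem_iota /ext /= => hx hy; rewrite hx hy; exact: eqn_double.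
apply/hasP => [[z /mapP [x hx ->] /mapP [y hy]]] /eqP.
have hx6 : x < 6 by move: hx; rewrite mem_iota.
have hy6 : 6 <= y by move: hy; rewrite !inE => /or3P [] /eqP ->.
by rewrite /ext hx6 ltnNge hy6 /= odd_neq.
Qed.

Lemma main r : forall t g c, t + r.+1 = size w -> Inv t g c ->
  cnt (FF (size w)) (iota 0 (size w * 3)) = c + mrun g (drop t (map fst w)) (drop t st).
Proof.
elim: r => [|r IH] t g c ht [Ha Hb Hc].
- have htw : t < size w by lia.
  rewrite (drop_nth 0) ?size_map // (drop_nth false) ?hst //.
  rewrite (drop_oversize (s := map fst w)) ?size_map; last by lia.
  rewrite /= (nth_map (0%N, true)) //.
  set i := (nth (0%N, true) w t).1; set b := nth false st t.
  have hi : i < 2 by exact: letter_lt.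
  rewrite -ht addn1 FF_S.
  have EB : BE t = emap (phi t) (sedges 3 0 i b).
    rewrite /BE -ht addn1 letter_edgesE /vid modnn modn_small ?mul0n; last by lia.
    rewrite !addn0 mulnC; symmetry; apply: emap_sedges => // p hp.
    + by rewrite /phi ltnNge leq_addr /=; lia.
    + by rewrite /phi add0n hp.
  set W := map (phi t) (iota 0 6).
  have sub : {subset W <= iota 0 (t.+1 * 3)}.
    move=> x /mapP [y]; rewrite !mem_iota /phi => hy ->; case: ifP => //; lia.
  have HE : inD W (BE t) by rewrite EB; apply: all_emap; apply: sedges_in6.
  have := cnt_split_fold (FF t) sub HE.
  have -> : cnt (FF t) W = cnt g (iota 0 6).
    rewrite /W cnt_map; apply: cnt_ker => x y hx hy /=; by rewrite Ha.
  have -> : cnt (mfold (FF t) (BE t)) W = finc g i b.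
    rewrite /W cnt_map /finc; apply: cnt_ker => x y hx hy /=.
    rewrite EB (@fold_ren (phi t) (mem (iota 0 6)) _ (FF t) g) //.
    exact: sedges_in6.
  rewrite (_ : t.+1 * 3 = 3 * t + 3); last by lia.
  rewrite Hb; lia.
- have htw : t.+1 < size w by lia.
  rewrite (drop_nth 0) ?size_map; last by lia.
  rewrite (drop_nth false) ?hst; last by lia.
  rewrite mrun_cons; last first.
    by rewrite (drop_nth 0) ?size_map.
  rewrite (nth_map (0%N, true)); last by lia.
  set i := (nth (0%N, true) w t).1; set b := nth false st t.
  have hi : i < 2 by apply: letter_lt; lia.
  rewrite addnA; apply: IH; first by lia.
  set h := mfold (ext g) (sedges 3 6 i b).
  have EB : BE t = emap (phi' t) (sedges 3 6 i b).
    rewrite /BE -ht addnS letter_edgesE /vid !modn_small; try lia.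
    rewrite !addn0 (_ : t.+1 * 3 = 3 * t + 3); last by lia.
    rewrite mulnC; symmetry; apply: emap_sedges => // p hp.
    + by solve_phi.
    + by solve_phi.
  have kerExt : {in iota 0 9 &, forall x y,
      (ext g x == ext g y) = (FF t (phi' t x) == FF t (phi' t y))}.
    move=> x y; rewrite !mem_iota /= /ext /phi' => hx hy.
    case: (ltnP x 6) => hx6; case: (ltnP y 6) => hy6.
    - by rewrite eqn_double Ha // mem_iota.
    - rewrite odd_neq eq_sym Hc; last by lia.
      apply/esym/eqP; rewrite /phi; case: ifP; lia.
    - rewrite eq_sym odd_neq Hc; last by lia.
      apply/esym/eqP; rewrite /phi; case: ifP; lia.
    - rewrite Hc; last by lia.
      by apply/eqP/eqP; lia.
  have kerH : {in iota 0 9 &, forall x y,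
      (h x == h y) = (FF t.+1 (phi' t x) == FF t.+1 (phi' t y))}.
    move=> x y hx hy; rewrite FF_S EB; apply: (@fold_ren (phi' t) (mem (iota 0 9))) => //; exact: sedges_in9.
  split.
  + move=> x y; rewrite !mem_iota /= => hx hy.
    have Ep : forall z, z < 6 -> phi t.+1 z = phi' t (if z < 3 then z else z + 3).
      by move=> z hz; solve_phi.
    rewrite /stepg -/h (Ep x) // (Ep y) //; apply: kerH; rewrite mem_iota;
      case: ifP; lia.
  + set L := iota 0 (3 * t.+1 + 3); set W := map (phi' t) (iota 0 9).
    have sub : {subset W <= L}.
      move=> x /mapP [y]; rewrite !mem_iota => hy ->; solve_phi.
    have HE : inD W (BE t) by rewrite EB; apply: all_emap; apply: sedges_in9.
    have := cnt_split_fold (FF t) sub HE; rewrite -FF_S.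
    have -> : cnt (FF t) W = cnt g (iota 0 6) + 3.
      by rewrite /W cnt_map -cnt_ext; apply: cnt_ker => x y hx hy /=; rewrite kerExt.
    have -> : cnt (FF t.+1) W = cnt h (iota 0 9).
      by rewrite /W cnt_map; apply: cnt_ker => x y hx hy /=; rewrite kerH.
    have -> : cnt (FF t) L = cnt (FF t) (iota 0 (3 * t + 3)) + 3.
      rewrite /L (_ : 3 * t.+1 + 3 = (3 * t + 3) + 3); last by lia.
      rewrite iotaD add0n /cnt map_cat size_undup_cat_disj.
        congr (_ + _); rewrite -/(cnt _ _).
        rewrite (@cnt_ker _ id); first by rewrite /cnt map_id undup_id ?iota_uniq // size_iota.
        by move=> x y; rewrite !mem_iota => hx hy; rewrite Hc //; lia.
      apply/hasP => [[z]] /mapP [x]; rewrite mem_iota => hx -> /mapP [y].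
      rewrite mem_iota => hy /eqP; rewrite eq_sym Hc; last by lia.
      by move=> /eqP; lia.
    have -> : cnt (stepg g i b) (iota 0 6) = cnt h [:: 0; 1; 2; 6; 7; 8] by [].
    have : cnt h [:: 0; 1; 2; 6; 7; 8] <= cnt h (iota 0 9) by apply: cnt_sub; apply/allP.
    rewrite /stepc -/h Hb; lia.
  + move=> x hx y; rewrite FF_S EB; apply: fold_fresh.
      apply/allP => e he; have := (allP (all_emap (phi' t) (sedges_in9 b hi))) e he.
      move=> /andP [/mapP [p1 hp1 ->] /mapP [p2 hp2 ->]].
      move: hp1 hp2; rewrite !mem_iota => hp1 hp2.
      apply/andP; split; apply/eqP; solve_phi.
    move=> z; apply: Hc; lia.
Qed.

Lemma nloops_mrun : 0 < size w ->
  nloops 3 w st = mrun (fun x => x %% 3) (map fst w) st.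
Proof.
move=> hw0.
have -> : nloops 3 w st = cnt (FF (size w)) (iota 0 (size w * 3)).
  by rewrite /nloops /cnt /FF /BE /state_edges; case: (size w) hw0.
rewrite -[map fst w](drop0) -[st]drop0.
have := main (r := (size w).-1) (t := 0) (g := fun x => x %% 3) (c := 0).
rewrite add0n; apply; first by lia.
split.
- by apply: (allin2eq (P := fun x y => x %% 3 == y %% 3)
     (Q := fun x y => FF 0 (phi 0 x) == FF 0 (phi 0 y))).
- by [].
- by move=> x _ y; rewrite /FF.
Qed.
End Corr.

From mathcomp Require Import ring.

Lemma mrun_pos g ls bs : size bs = size ls -> ls != [::] -> 0 < mrun g ls bs.
Proof.
elim: ls g bs => // i ls IH g [|b bs] //= [hs] _.
case: ls IH hs => [|j ls] IH hs.
  by rewrite /finc /cnt lt0n size_eq0; apply/eqP => /undup_nil.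
by rewrite ltn_addl // IH.
Qed.

Lemma ext_ker g g' : {in iota 0 6 &, forall x y, (g x == g y) = (g' x == g' y)} ->
  {in iota 0 9 &, forall x y, (ext g x == ext g y) = (ext g' x == ext g' y)}.
Proof.
move=> H x y; rewrite !mem_iota /ext /= => hx hy.
case: (ltnP x 6) => hx6; case: (ltnP y 6) => hy6 //.
- by rewrite !eqn_double H // mem_iota.
- by rewrite !odd_neq.
- by rewrite eq_sym odd_neq eq_sym odd_neq.
Qed.

Lemma mrun_ker g g' ls bs : all (fun i => i < 2) ls ->
  {in iota 0 6 &, forall x y, (g x == g y) = (g' x == g' y)} ->
  mrun g ls bs = mrun g' ls bs.
Proof.
elim: ls g g' bs => // i ls IH g g' [|b bs] //= /andP [hi hls] H.
have Hf : forall E, inD (iota 0 9) E -> {in iota 0 9 &, forall x y,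
   (mfold (ext g) E x == mfold (ext g) E y) = (mfold (ext g') E x == mfold (ext g') E y)}.
  move=> E HE x y hx hy.
  by rewrite (@fold_ren id (mem (iota 0 9)) E (ext g') (ext g)) ?emap_id // => u v hu hv; rewrite (ext_ker H).
case: ls IH hls => [|j ls] IH hls.
  rewrite /finc; apply: cnt_ker => x y hx hy.
  by rewrite (@fold_ren id (mem (iota 0 6)) _ g' g) ?emap_id //; exact: sedges_in6.
have Hs := Hf _ (sedges_in9 b hi).
have sub9 : {subset [:: 0; 1; 2; 6; 7; 8] <= iota 0 9} by apply/allP.
congr (_ + _).
  rewrite /stepc (cnt_ker (g := mfold (ext g') (sedges 3 6 i b)) (s := iota 0 9)) //.
  rewrite (cnt_ker (g := mfold (ext g') (sedges 3 6 i b)) (s := [:: 0; 1; 2; 6; 7; 8])) //.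
  by move=> x y hx hy; apply: Hs; apply: sub9.
apply: IH => // x y hx hy; rewrite /stepg; apply: Hs; move: hx hy;
  rewrite !mem_iota /= => hx hy; repeat (case: ifP => ?); lia.
Qed.

Definition nthl (l : seq nat) : nat -> nat := fun x => nth 0 l x.
Definition nrm (g : nat -> nat) : seq nat :=
  [seq find (fun y => g y == g x) (iota 0 6) | x <- iota 0 6].

Lemma nrm_ker g : {in iota 0 6 &, forall x y, (g x == g y) = (nthl (nrm g) x == nthl (nrm g) y)}.
Proof.
have key : forall x, x \in iota 0 6 ->
   nthl (nrm g) x < 6 /\ g (nthl (nrm g) x) = g x.
  move=> x hx; have hx6 : x < 6 by move: hx; rewrite mem_iota.
  rewrite /nthl /nrm (nth_map 0) ?size_iota // nth_iota //.
  have hh : has (fun y => g y == g x) (iota 0 6) by apply/hasP; exists x.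
  split; first by move: hh; rewrite has_find size_iota.
  have := nth_find 0 hh; rewrite nth_iota ?add0n ?(eqP (nth_find 0 hh)).
    by move=> /eqP.
  by move: hh; rewrite has_find size_iota.
move=> x y hx hy; apply/eqP/eqP => [E|E].
  have hx6 : x < 6 by move: hx; rewrite mem_iota.
  have hy6 : y < 6 by move: hy; rewrite mem_iota.
  rewrite /nthl /nrm (nth_map 0) ?size_iota // (nth_map 0) ?size_iota //.
  rewrite !nth_iota // !add0n.
  by apply: eq_find => z; rewrite E.
by rewrite -(key x hx).2 -(key y hy).2 E.
Qed.

Section Sum.
Variables (R : fieldType) (a : R).
Local Open Scope ring_scope.
Hypothesis a0 : a != 0.

Definition dl : R := - a ^+ 2 - a ^- 2.
Definition aex (bs : seq bool) : int := \sum_(b <- bs) (if b then 1 else -1 : int).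
Definition sa (b : bool) : R := if b then a else a^-1.
Definition Tn n (g : nat -> nat) (ls : seq nat) : R :=
  \sum_(bs : n.-tuple bool) a ^ aex bs * dl ^+ (mrun g ls bs).-1.

Lemma big_tuple_cons n (F : seq bool -> R) :
  \sum_(t : n.+1.-tuple bool) F t = \sum_(b : bool) \sum_(t : n.-tuple bool) F (b :: t).
Proof.
rewrite pair_big /=.
rewrite (reindex (fun p : bool * n.-tuple bool => [tuple of p.1 :: p.2])) /=.
  by apply: eq_bigr => -[b t].
exists (fun t : n.+1.-tuple bool => (thead t, [tuple of behead t])).
  by move=> [b t] _; rewrite theadE; congr pair; apply: val_inj.
by move=> t _; rewrite [in RHS](tuple_eta t).
Qed.

Lemma big_tuple0 (F : seq bool -> R) : \sum_(t : 0.-tuple bool) F t = F [::].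
Proof. by rewrite (big_pred1 [tuple]) // => t; apply/esym/eqP; apply: tuple0. Qed.

Lemma Tn_cons n g i ls : ls != [::] -> size ls = n ->
  Tn n.+1 g (i :: ls) = \sum_(b : bool) sa b * dl ^+ (stepc g i b) * Tn n (stepg g i b) ls.
Proof.
move=> hls hn; rewrite /Tn (big_tuple_cons n (fun s => a ^ aex s * dl ^+ (mrun g (i :: ls) s).-1)); apply: eq_bigr => b _; rewrite mulr_sumr.
apply: eq_bigr => t _; rewrite mrun_cons //.
have hp : (0 < mrun (stepg g i b) ls t)%N by apply: mrun_pos => //; rewrite size_tuple.
rewrite -(prednK hp) addnS /= exprD /aex big_cons expfzDr //.
clear hp; case: b; rewrite /sa ?expr1z ?exprN1 -!mulrA; congr (_ * _); exact: mulrCA.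
Qed.

Lemma Tn_ker n g g' ls : all (fun i => (i < 2)%N) ls ->
  {in iota 0 6 &, forall x y, (g x == g y) = (g' x == g' y)} -> Tn n g ls = Tn n g' ls.
Proof. by move=> hl H; apply: eq_bigr => t _; rewrite (@mrun_ker g g' ls t hl H). Qed.

Definition Tl n l ls := Tn n (nthl l) ls.
Fact sg_key : unit. Proof. exact: tt. Qed.
Definition sg := locked_with sg_key (fun l i b => nrm (stepg (nthl l) i b)).
Canonical sg_unlock := [unlockable of sg].
Fact sc_key : unit. Proof. exact: tt. Qed.
Definition sc := locked_with sc_key (fun l i b => stepc (nthl l) i b).
Canonical sc_unlock := [unlockable of sc].
Fact fc_key : unit. Proof. exact: tt. Qed.
Definition fc := locked_with fc_key (fun l i b => finc (nthl l) i b).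
Canonical fc_unlock := [unlockable of fc].

Lemma Tl_cons n l i ls : all (fun i => (i < 2)%N) ls -> ls != [::] -> size ls = n ->
  Tl n.+1 l (i :: ls) = a * dl ^+ (sc l i true) * Tl n (sg l i true) ls
                      + a^-1 * dl ^+ (sc l i false) * Tl n (sg l i false) ls.
Proof.
move=> hl hls hn; rewrite /Tl Tn_cons // big_bool /sg /sc !unlock /=.
by rewrite (Tn_ker _ hl (nrm_ker _)) (Tn_ker _ hl (nrm_ker (stepg _ i false))).
Qed.

Lemma Tl1 l i : Tl 1 l [:: i] = a * dl ^+ (fc l i true).-1 + a^-1 * dl ^+ (fc l i false).-1.
Proof.
rewrite /Tl /Tn (big_tuple_cons 0 (fun s => a ^ aex s * dl ^+ (mrun (nthl l) [:: i] s).-1)).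
rewrite (eq_bigr (fun b => a ^ aex [:: b] * dl ^+ (mrun (nthl l) [:: i] [:: b]).-1)); last first.
  by move=> b _; rewrite (big_tuple0 (fun s => a ^ aex (b :: s) * dl ^+ (mrun (nthl l) [:: i] (b :: s)).-1)).
by rewrite big_bool /fc unlock /aex !big_cons !big_nil !addr0.
Qed.
End Sum.

Definition k0 : seq nat := [:: 0; 1; 2; 0; 1; 2].
Definition k1 : seq nat := [:: 0; 0; 2; 3; 3; 2].
Definition k2 : seq nat := [:: 0; 1; 1; 0; 4; 4].
Definition k3 : seq nat := [:: 0; 0; 2; 2; 4; 4].
Definition k4 : seq nat := [:: 0; 1; 1; 3; 3; 0].
Lemma sg_k00T : sg k0 0 true = k1. Proof. by rewrite unlock; vm_compute. Qed.
Lemma sc_k00T : sc k0 0 true = 0. Proof. by rewrite unlock; vm_compute. Qed.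
Lemma sg_k00F : sg k0 0 false = k0. Proof. by rewrite unlock; vm_compute. Qed.
Lemma sc_k00F : sc k0 0 false = 0. Proof. by rewrite unlock; vm_compute. Qed.
Lemma sg_k01T : sg k0 1 true = k2. Proof. by rewrite unlock; vm_compute. Qed.
Lemma sc_k01T : sc k0 1 true = 0. Proof. by rewrite unlock; vm_compute. Qed.
Lemma sg_k01F : sg k0 1 false = k0. Proof. by rewrite unlock; vm_compute. Qed.
Lemma sc_k01F : sc k0 1 false = 0. Proof. by rewrite unlock; vm_compute. Qed.
Lemma sg_k10T : sg k1 0 true = k1. Proof. by rewrite unlock; vm_compute. Qed.
Lemma sc_k10T : sc k1 0 true = 1. Proof. by rewrite unlock; vm_compute. Qed.
Lemma sg_k10F : sg k1 0 false = k1. Proof. by rewrite unlock; vm_compute. Qed.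
Lemma sc_k10F : sc k1 0 false = 0. Proof. by rewrite unlock; vm_compute. Qed.
Lemma sg_k11T : sg k1 1 true = k3. Proof. by rewrite unlock; vm_compute. Qed.
Lemma sc_k11T : sc k1 1 true = 0. Proof. by rewrite unlock; vm_compute. Qed.
Lemma sg_k11F : sg k1 1 false = k1. Proof. by rewrite unlock; vm_compute. Qed.
Lemma sc_k11F : sc k1 1 false = 0. Proof. by rewrite unlock; vm_compute. Qed.
Lemma sg_k20T : sg k2 0 true = k4. Proof. by rewrite unlock; vm_compute. Qed.
Lemma sc_k20T : sc k2 0 true = 0. Proof. by rewrite unlock; vm_compute. Qed.
Lemma sg_k20F : sg k2 0 false = k2. Proof. by rewrite unlock; vm_compute. Qed.
Lemma sc_k20F : sc k2 0 false = 0. Proof. by rewrite unlock; vm_compute. Qed.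
Lemma sg_k21T : sg k2 1 true = k2. Proof. by rewrite unlock; vm_compute. Qed.
Lemma sc_k21T : sc k2 1 true = 1. Proof. by rewrite unlock; vm_compute. Qed.
Lemma sg_k21F : sg k2 1 false = k2. Proof. by rewrite unlock; vm_compute. Qed.
Lemma sc_k21F : sc k2 1 false = 0. Proof. by rewrite unlock; vm_compute. Qed.
Lemma sg_k30T : sg k3 0 true = k1. Proof. by rewrite unlock; vm_compute. Qed.
Lemma sc_k30T : sc k3 0 true = 0. Proof. by rewrite unlock; vm_compute. Qed.
Lemma sg_k30F : sg k3 0 false = k3. Proof. by rewrite unlock; vm_compute. Qed.
Lemma sc_k30F : sc k3 0 false = 0. Proof. by rewrite unlock; vm_compute. Qed.
Lemma sg_k31T : sg k3 1 true = k3. Proof. by rewrite unlock; vm_compute. Qed.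
Lemma sc_k31T : sc k3 1 true = 1. Proof. by rewrite unlock; vm_compute. Qed.
Lemma sg_k31F : sg k3 1 false = k3. Proof. by rewrite unlock; vm_compute. Qed.
Lemma sc_k31F : sc k3 1 false = 0. Proof. by rewrite unlock; vm_compute. Qed.
Lemma sg_k40T : sg k4 0 true = k4. Proof. by rewrite unlock; vm_compute. Qed.
Lemma sc_k40T : sc k4 0 true = 1. Proof. by rewrite unlock; vm_compute. Qed.
Lemma sg_k40F : sg k4 0 false = k4. Proof. by rewrite unlock; vm_compute. Qed.
Lemma sc_k40F : sc k4 0 false = 0. Proof. by rewrite unlock; vm_compute. Qed.
Lemma sg_k41T : sg k4 1 true = k2. Proof. by rewrite unlock; vm_compute. Qed.
Lemma sc_k41T : sc k4 1 true = 0. Proof. by rewrite unlock; vm_compute. Qed.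
Lemma sg_k41F : sg k4 1 false = k4. Proof. by rewrite unlock; vm_compute. Qed.
Lemma sc_k41F : sc k4 1 false = 0. Proof. by rewrite unlock; vm_compute. Qed.
Lemma fc_k0T : (fc k0 0 true).-1 = 1. Proof. by rewrite unlock; vm_compute. Qed.
Lemma fc_k0F : (fc k0 0 false).-1 = 2. Proof. by rewrite unlock; vm_compute. Qed.
Lemma fc_k1T : (fc k1 0 true).-1 = 2. Proof. by rewrite unlock; vm_compute. Qed.
Lemma fc_k1F : (fc k1 0 false).-1 = 1. Proof. by rewrite unlock; vm_compute. Qed.
Lemma fc_k2T : (fc k2 0 true).-1 = 0. Proof. by rewrite unlock; vm_compute. Qed.
Lemma fc_k2F : (fc k2 0 false).-1 = 1. Proof. by rewrite unlock; vm_compute. Qed.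
Lemma fc_k3T : (fc k3 0 true).-1 = 1. Proof. by rewrite unlock; vm_compute. Qed.
Lemma fc_k3F : (fc k3 0 false).-1 = 0. Proof. by rewrite unlock; vm_compute. Qed.
Lemma fc_k4T : (fc k4 0 true).-1 = 1. Proof. by rewrite unlock; vm_compute. Qed.
Lemma fc_k4F : (fc k4 0 false).-1 = 0. Proof. by rewrite unlock; vm_compute. Qed.
Definition tabE := (sg_k00T, sc_k00T, sg_k00F, sc_k00F, sg_k01T, sc_k01T, sg_k01F, sc_k01F, sg_k10T, sc_k10T, sg_k10F, sc_k10F, sg_k11T, sc_k11T, sg_k11F, sc_k11F, sg_k20T, sc_k20T, sg_k20F, sc_k20F, sg_k21T, sc_k21T, sg_k21F, sc_k21F, sg_k30T, sc_k30T, sg_k30F, sc_k30F, sg_k31T, sc_k31T, sg_k31F, sc_k31F, sg_k40T, sc_k40T, sg_k40F, sc_k40F, sg_k41T, sc_k41T, sg_k41F, sc_k41F, fc_k0T, fc_k0F, fc_k1T, fc_k1F, fc_k2T, fc_k2F, fc_k3T, fc_k3F, fc_k4T, fc_k4F).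

Definition DD m : seq nat := flatten (nseq m [:: 0; 1; 0]%N).
Lemma DD_S m : DD m.+1 = [:: 0, 1, 0 & DD m]%N. Proof. by []. Qed.
Lemma size_DD m : size (DD m) = (3 * m)%N.
Proof. by elim: m => //= m IH; rewrite IH; lia. Qed.
Lemma all_DD m : all (fun i => (i < 2)%N) (DD m).
Proof. by elim: m. Qed.
Lemma DD_nil m : (0 < m)%N -> DD m != [::].
Proof. by case: m. Qed.

Section Closed.
Variables (R : fieldType) (a : R).
Local Open Scope ring_scope.
Hypothesis a0 : a != 0.

Definition u m l := Tl a (3 * m) l (DD m).

Lemma saT : sa a true = a. Proof. by []. Qed.
Lemma saF : sa a false = a^-1. Proof. by []. Qed.

Lemma u_S m l : (0 < m)%N -> u m.+1 l =
  a * dl a ^+ (sc l 0 true) * (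
    a * dl a ^+ (sc (sg l 0 true) 1 true) * (
      a * dl a ^+ (sc (sg (sg l 0 true) 1 true) 0 true) * u m (sg (sg (sg l 0 true) 1 true) 0 true)
    + a^-1 * dl a ^+ (sc (sg (sg l 0 true) 1 true) 0 false) * u m (sg (sg (sg l 0 true) 1 true) 0 false))
  + a^-1 * dl a ^+ (sc (sg l 0 true) 1 false) * (
      a * dl a ^+ (sc (sg (sg l 0 true) 1 false) 0 true) * u m (sg (sg (sg l 0 true) 1 false) 0 true)
    + a^-1 * dl a ^+ (sc (sg (sg l 0 true) 1 false) 0 false) * u m (sg (sg (sg l 0 true) 1 false) 0 false)))
+ a^-1 * dl a ^+ (sc l 0 false) * (
    a * dl a ^+ (sc (sg l 0 false) 1 true) * (
      a * dl a ^+ (sc (sg (sg l 0 false) 1 true) 0 true) * u m (sg (sg (sg l 0 false) 1 true) 0 true)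
    + a^-1 * dl a ^+ (sc (sg (sg l 0 false) 1 true) 0 false) * u m (sg (sg (sg l 0 false) 1 true) 0 false))
  + a^-1 * dl a ^+ (sc (sg l 0 false) 1 false) * (
      a * dl a ^+ (sc (sg (sg l 0 false) 1 false) 0 true) * u m (sg (sg (sg l 0 false) 1 false) 0 true)
    + a^-1 * dl a ^+ (sc (sg (sg l 0 false) 1 false) 0 false) * u m (sg (sg (sg l 0 false) 1 false) 0 false))).
Proof.
move=> hm; rewrite /u (_ : (3 * m.+1 = (3 * m).+3)%N); last by lia.
have h1 := all_DD m; have h2 := DD_nil hm; have h3 := size_DD m.
by rewrite DD_S !Tl_cons //= h3.
Qed.

Lemma u_1 l : u 1 l =
  a * dl a ^+ (sc l 0 true) * (
    a * dl a ^+ (sc (sg l 0 true) 1 true) * (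
      a * dl a ^+ (fc (sg (sg l 0 true) 1 true) 0 true).-1
    + a^-1 * dl a ^+ (fc (sg (sg l 0 true) 1 true) 0 false).-1)
  + a^-1 * dl a ^+ (sc (sg l 0 true) 1 false) * (
      a * dl a ^+ (fc (sg (sg l 0 true) 1 false) 0 true).-1
    + a^-1 * dl a ^+ (fc (sg (sg l 0 true) 1 false) 0 false).-1))
+ a^-1 * dl a ^+ (sc l 0 false) * (
    a * dl a ^+ (sc (sg l 0 false) 1 true) * (
      a * dl a ^+ (fc (sg (sg l 0 false) 1 true) 0 true).-1
    + a^-1 * dl a ^+ (fc (sg (sg l 0 false) 1 true) 0 false).-1)
  + a^-1 * dl a ^+ (sc (sg l 0 false) 1 false) * (
      a * dl a ^+ (fc (sg (sg l 0 false) 1 false) 0 true).-1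
    + a^-1 * dl a ^+ (fc (sg (sg l 0 false) 1 false) 0 false).-1)).
Proof. by rewrite /u (_ : DD 1 = [:: 0; 1; 0]%N) // (@Tl_cons _ _ a0 2) // !(@Tl_cons _ _ a0 1) // !Tl1. Qed.

Definition Qodd m X :=
  [/\ u m k0 = (a + a ^- 7) / X, u m k1 = - a ^+ 3 * X,
      u m k2 = - a ^+ 3 * X, u m k3 = (a + a ^+ 5) * X &
      u m k4 = (a + a ^+ 5) * X].

Definition Qeven m X :=
  [/\ u m k0 = 2%:R * a ^+ 6 * X + (a ^- 2 + a ^- 10) / X,
      u m k1 = - (a ^+ 4 + a ^+ 8) * X,
      u m k2 = - (a ^+ 4 + a ^+ 8) * X, u m k3 = a ^+ 6 * X &
      u m k4 = a ^+ 6 * X].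

Lemma Qodd1 : Qodd 1 (a ^+ 0).
Proof.
by split; rewrite u_1 !tabE ?expr0 ?expr1 /dl; field; rewrite ?a0 ?oner_neq0.
Qed.

Lemma Qeven_step m X : X != 0 -> (0 < m)%N -> Qodd m X -> Qeven m.+1 X.
Proof.
move=> hX hm [h0 h1 h2 h3 h4].
by split; rewrite u_S // !tabE ?h0 ?h1 ?h2 ?h3 ?h4 ?expr0 ?expr1 /dl; field;
  rewrite ?hX ?a0.
Qed.

Lemma Qodd_step m X : X != 0 -> (0 < m)%N -> Qeven m X -> Qodd m.+1 (X * a ^+ 6).
Proof.
move=> hX hm [h0 h1 h2 h3 h4].
by split; rewrite u_S // !tabE ?h0 ?h1 ?h2 ?h3 ?h4 ?expr0 ?expr1 /dl; field;
  rewrite ?hX ?a0.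
Qed.

Lemma Qall k : Qodd (2 * k).+1 (a ^+ (6 * k)) /\ Qeven (2 * k).+2 (a ^+ (6 * k)).
Proof.
have hX : forall k, a ^+ (6 * k) != 0 by move=> n; rewrite expf_neq0.
elim: k => [|k [_ IH]].
  rewrite !muln0; split; first exact: Qodd1.
  by apply: Qeven_step => //; rewrite ?expf_neq0 //; exact: Qodd1.
have Ho : Qodd (2 * k.+1).+1 (a ^+ (6 * k.+1)).
  rewrite mulnS add2n mulnS exprD mulrC; exact: Qodd_step.
split => //; apply: Qeven_step => //.
Qed.
End Closed.

Local Open Scope ring_scope.

Lemma map_fst_D m : map fst (Delta3_pow m) = DD m.
Proof. by elim: m => //= m ->. Qed.
Lemma size_D m : size (Delta3_pow m) = (3 * m)%N.
Proof. by rewrite -(size_map fst) map_fst_D size_DD. Qed.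
Lemma allfst_D m : all (fun l : nat * bool => (l.1 < 2)%N) (Delta3_pow m).
Proof. by elim: m. Qed.
Lemma allsnd_D m : all (fun l : nat * bool => l.2) (Delta3_pow m).
Proof. by elim: m. Qed.

Lemma writhe_D m : writhe (Delta3_pow m) = - (3 * m)%N%:Z.
Proof.
elim: m => [|m IH]; first by rewrite /writhe big_nil.
move: IH; rewrite /writhe /Delta3_pow /= !big_cons /= => ->.
rewrite (_ : (3 * m.+1 = (3 * m).+3)%N); last by lia.
lia.
Qed.

Lemma Aexp_pos (w : braid_word) (st : (size w).-tuple bool) :
  all (fun l : nat * bool => l.2) w -> state_Aexp w st = aex st.
Proof.
move=> hw; rewrite /state_Aexp /aex (big_nth false) size_tuple big_mkord.
apply: eq_bigr => j _; rewrite ((allP hw) _ (mem_nth _ (ltn_ord j))).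
by rewrite eqb_id.
Qed.

Lemma kbr_D (R : fieldType) (a : R) m : (0 < m)%N -> kbracket 3 (Delta3_pow m) a = u a m k0.
Proof.
move=> hm; rewrite /kbracket.
transitivity (Tn a (size (Delta3_pow m)) (fun x => x %% 3)%N (map fst (Delta3_pow m))).
  apply: eq_bigr => st _; rewrite Aexp_pos ?allsnd_D // nloops_mrun ?allfst_D ?size_tuple //.
  by rewrite size_D; lia.
rewrite map_fst_D /u /Tl size_D; apply: Tn_ker; first exact: all_DD.
by apply: (allin2eq (P := fun x y => (x %% 3 == y %% 3)%N) (Q := fun x y => nthl k0 x == nthl k0 y)).
Qed.

Lemma powX (R : fieldType) (x : R) k n c d : n = (6 * k * c + d)%N ->
  x ^+ n = (x ^+ (6 * k)) ^+ c * x ^+ d.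
Proof. by move=> ->; rewrite exprD exprM. Qed.

Theorem proposition1p5 (R : fieldType) (a : R) (k : nat) :
  a != 0 ->
  let s := a ^+ 2 in
  jones 3 (Delta3_pow (2 * k)) a
    = 2%:R * s ^+ (12 * k) + s ^+ (6 * k + 2) + s ^ ((6 * k)%:Z - 2%:Z)
  /\ jones 3 (Delta3_pow (2 * k + 1)) a
    = - s ^+ (6 * k + 5) - s ^+ (6 * k + 1).
Proof.
move=> a0 s.
have hj : forall m, (0 < m)%N -> jones 3 (Delta3_pow m) a = (- a ^+ 3) ^+ (3 * m) * u a m k0.
  by move=> m hm; rewrite /jones writhe_D opprK kbr_D.
have hX : a ^+ (6 * k) != 0 by rewrite expf_neq0.
split.
- case: k hX => [|k] hX.
    rewrite /jones /kbracket (big_tuple0 (fun st => a ^ state_Aexp (Delta3_pow 0) st *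
      (- a ^+ 2 - a ^- 2) ^+ (nloops 3 (Delta3_pow 0) st).-1)).
    rewrite (_ : nloops 3 (Delta3_pow 0) [::] = 3%N); last by vm_compute.
    rewrite /state_Aexp big_ord0 /writhe big_nil expr0z mul1r.
    rewrite expr0z mul1r (_ : ((6 * 0)%N%:Z - 2%:Z) = - (2%N)%:Z) // -exprnN muln0 add0n expr0 /s.
    change (3.-1)%N with 2%N.
    by field; rewrite ?a0.
  rewrite (_ : (2 * k.+1 = (2 * k).+2)%N); last by lia.
  rewrite hj //; have [_ [h0 _ _ _ _]] := Qall a0 k; rewrite h0.
  rewrite (_ : (3 * (2 * k).+2 = 2 * (3 * k.+1))%N); last by lia.
  rewrite exprM sqrrN /s subzn; last by lia.
  rewrite (_ : (a ^+ 2) ^ (6 * k.+1 - 2)%N = (a ^+ 2) ^+ (6 * k.+1 - 2)) // -!exprM.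
  rewrite (@powX _ a k (3 * (2 * (3 * k.+1))) 3 18); last by lia.
  rewrite (@powX _ a k (2 * (12 * k.+1)) 4 24); last by lia.
  rewrite (@powX _ a k (2 * (6 * k.+1 + 2)) 2 16); last by lia.
  rewrite (@powX _ a k (2 * (6 * k.+1 - 2)) 2 8); last by lia.
  clear hX; have hX : a ^+ (6 * k) != 0 by rewrite expf_neq0.
  move: hX; set X := a ^+ (6 * k) => hX.
  by field; rewrite ?hX ?a0.
- rewrite (_ : (2 * k + 1 = (2 * k).+1)%N); last by lia.
  rewrite hj //; have [[h0 _ _ _ _] _] := Qall a0 k; rewrite h0.
  rewrite (_ : (3 * (2 * k).+1 = (2 * (3 * k + 1)).+1)%N); last by lia.
  rewrite exprS exprM sqrrN /s -!exprM (@powX _ a k (3 * (2 * (3 * k + 1))) 3 6); last by lia.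
  rewrite (@powX _ a k (2 * (6 * k + 5)) 2 10); last by lia.
  rewrite (@powX _ a k (2 * (6 * k + 1)) 2 2); last by lia.
  move: hX; set X := a ^+ (6 * k) => hX.
  by field; rewrite ?hX ?a0.
Qed.
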